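(* Fix $p\in[0,\infty]$, a dynamic monetary risk measure $(R_t)_{t=0}^{T-1}$, a dynamic monetary utility function $(U_t)_{t=0}^{T-1}$ and $\eta_t\in L^0(\mathcal{F}_t)$, $\eta_t>0$; let $W_t$ and the cost-of-capital margins $V_t$ be as defined in the context. Let $X,\widetilde X$ be $\mathbb{F}$-adapted cash flows with $X_s,\widetilde X_s\in L^p(\mathcal{F}_s)$ for every $s$. (i) Let $t<T$, $a\in L^p_+(\mathcal{F}_t)$, let $b=(b_1,\dots,b_T)$ be a vector with components in $L^p(\mathcal{F}_t)$, and suppose $X_u\le\widetilde X_u$ for each $u$. Then $$V_t(aX)=aV_t(X),\qquad V_t(X+b)=V_t(X)+\sum_{u=t+1}^T b_u,\qquad V_t(X)\le V_t(\widetilde X).$$ (ii) (Time consistency) For every pair of times $s\le t$, if $(X_u)_{u=1}^t=(\widetilde X_u)_{u=1}^t$ and $V_t(X)\le V_t(\widetilde X)$, then $V_s(X)\le V_s(\widetilde X)$.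
   Context: Let $T\ge 1$ and $(\Omega,\mathcal{F},\mathbb{F},\mathbb{P})$ a filtered probability space with $\mathbb{F}=(\mathcal{F}_t)_{t=0}^T$, $\{\emptyset,\Omega\}=\mathcal{F}_0\subseteq\dots\subseteq\mathcal{F}_T=\mathcal{F}$. $L^0(\mathcal{F}_t)$: real $\mathcal{F}_t$-measurable random variables; $L^p(\mathcal{F}_t)$ for $p\in(0,\infty)$: those with $\mathbb{E}|Y|^p<\infty$; $L^\infty(\mathcal{F}_t)$: essentially bounded ones; $L^p_+$: nonnegative elements. (In)equalities are a.s.; $x_+=\max(x,0)$. A dynamic monetary risk measure: maps $R_t:L^p(\mathcal{F}_{t+1})\to L^p(\mathcal{F}_t)$, $t=0,\dots,T-1$, with $R_t(Y+\lambda)=R_t(Y)-\lambda$ ($\lambda\in L^p(\mathcal{F}_t)$), $Y\le\widetilde Y\Rightarrow R_t(Y)\ge R_t(\widetilde Y)$, $R_t(cY)=cR_t(Y)$ ($c\in L^p_+(\mathcal{F}_t)$). A dynamic monetary utility function: maps $U_t:L^p(\mathcal{F}_{t+1})\to L^p(\mathcal{F}_t)$ with $U_t(Y+\lambda)=U_t(Y)+\lambda$, $Y\le\widetilde Y\Rightarrow U_t(Y)\le U_t(\widetilde Y)$, $U_t(cY)=cU_t(Y)$. Define $W_t(Y):=R_t(-Y)-\frac{1}{1+\eta_t}U_t((R_t(-Y)-Y)_+)$ for $Y\in L^p(\mathcal{F}_{t+1})$, and for an adapted cash flow $X=(X_t)_{t=1}^T$ with $X_t\in L^p(\mathcal{F}_t)$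 the cost-of-capital margins $V_t(X):=W_t\circ\dots\circ W_{T-1}(X_{t+1}+\dots+X_T)$ for $t=0,\dots,T-1$ and $V_T(X):=0$. Here $aX=(aX_u)_u$ and $X+b=(X_u+b_u)_u$. *)

(* Defs.v *)
From HB Require Import structures.
From mathcomp Require Import all_boot all_order all_algebra.
From mathcomp Require Import all_classical all_reals all_analysis.
Set Implicit Arguments. Unset Strict Implicit. Unset Printing Implicit Defensive.
Import Order.TTheory GRing.Theory Num.Theory.
Local Open Scope classical_set_scope.
Local Open Scope ring_scope.

Section CoC.
Context {R : realType} {d : measure_display} {Omega : measurableType d}.
Variable (P : probability Omega R).

Definition filtration (T : nat) (F : nat -> set (set Omega)) : Prop :=
  [/\ (forall t, (t <= T)%N -> sigma_algebra setT (F t)),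
      (forall s t, (s <= t)%N -> (t <= T)%N -> F s `<=` F t),
      F 0%N = [set A | A = set0 \/ A = setT] &
      F T = @measurable d Omega].

Definition meas_wrt (G : set (set Omega)) (f : Omega -> R) : Prop :=
  forall B : set R, measurable B -> G (f @^-1` B).

Definition as_eq (f g : Omega -> R) : Prop := {ae P, forall x, f x = g x}.
Definition as_le (f g : Omega -> R) : Prop := {ae P, forall x, f x <= g x}.

(* L^p(G) for p in [0, +oo]: p = 0 gives L^0, p = +oo gives L^oo. *)
Definition Lp (p : \bar R) (G : set (set Omega)) (f : Omega -> R) : Prop :=
  meas_wrt G f /\
  match p with
  | +oo%E => exists M : R, {ae P, forall x, `|f x| <= M}
  | r%:E => r = 0 \/ (\int[P]_x ((`|f x| `^ r)%:E) < +oo)%E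
  | -oo%E => False
  end.

Definition Lp_plus (p : \bar R) (G : set (set Omega)) (f : Omega -> R) : Prop :=
  Lp p G f /\ as_le (fun=> 0) f.

(* Dynamic monetary risk measure R_t : L^p(F_{t+1}) -> L^p(F_t), t = 0..T-1.
   Positive homogeneity is required whenever c * Y is again in L^p(F_{t+1}). *)
Definition dyn_risk_measure (p : \bar R) (T : nat) (F : nat -> set (set Omega))
    (Rm : nat -> (Omega -> R) -> (Omega -> R)) : Prop :=
  forall t, (t < T)%N ->
  [/\ (forall Y, Lp p (F t.+1) Y -> Lp p (F t) (Rm t Y)),
      (forall Y lam, Lp p (F t.+1) Y -> Lp p (F t) lam ->
         as_eq (Rm t (fun x => Y x + lam x)) (fun x => Rm t Y x - lam x)),
      (forall Y Y', Lp p (F t.+1) Y -> Lp p (F t.+1) Y' -> as_le Y Y' ->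
         as_le (Rm t Y') (Rm t Y)) &
      (forall Y c, Lp p (F t.+1) Y -> Lp_plus p (F t) c ->
         Lp p (F t.+1) (fun x => c x * Y x) ->
         as_eq (Rm t (fun x => c x * Y x)) (fun x => c x * Rm t Y x))].

Definition dyn_utility (p : \bar R) (T : nat) (F : nat -> set (set Omega))
    (Um : nat -> (Omega -> R) -> (Omega -> R)) : Prop :=
  forall t, (t < T)%N ->
  [/\ (forall Y, Lp p (F t.+1) Y -> Lp p (F t) (Um t Y)),
      (forall Y lam, Lp p (F t.+1) Y -> Lp p (F t) lam ->
         as_eq (Um t (fun x => Y x + lam x)) (fun x => Um t Y x + lam x)),
      (forall Y Y', Lp p (F t.+1) Y -> Lp p (F t.+1) Y' -> as_le Y Y' ->
         as_le (Um t Y) (Um t Y')) &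
      (forall Y c, Lp p (F t.+1) Y -> Lp_plus p (F t) c ->
         Lp p (F t.+1) (fun x => c x * Y x) ->
         as_eq (Um t (fun x => c x * Y x)) (fun x => c x * Um t Y x))].

Definition Wmap (Rm Um : nat -> (Omega -> R) -> (Omega -> R))
    (eta : nat -> Omega -> R) (t : nat) (Y : Omega -> R) : Omega -> R :=
  let RY := Rm t (fun x => - Y x) in
  fun x => RY x - (1 + eta t x)^-1 * Um t (fun y => Num.max (RY y - Y y) 0) x.

Fixpoint Wchain (Rm Um : nat -> (Omega -> R) -> (Omega -> R))
    (eta : nat -> Omega -> R) (t k : nat) (Y : Omega -> R) : Omega -> R :=
  match k with
  | O => Y
  | k'.+1 => Wmap Rm Um eta t (Wchain Rm Um eta t.+1 k' Y)
  end.

(* V_t(X) = W_t o ... o W_{T-1} (X_{t+1} + ... + X_T); for t = T this is the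
   empty sum 0, i.e. V_T(X) = 0. *)
Definition CoCM (T : nat) (Rm Um : nat -> (Omega -> R) -> (Omega -> R))
    (eta : nat -> Omega -> R) (t : nat) (X : nat -> Omega -> R) : Omega -> R :=
  Wchain Rm Um eta t (T - t) (fun x => \sum_(t.+1 <= u < T.+1) X u x).

End CoC.

(* Main.v *)
Require Import Defs.
From HB Require Import structures.
From mathcomp Require Import all_boot all_order all_algebra.
From mathcomp Require Import all_classical all_reals all_analysis.
From mathcomp Require Import measurable_realfun.
From mathcomp Require Import ring lra zify.
Import Order.TTheory GRing.Theory Num.Theory.
Local Open Scope classical_set_scope.
Local Open Scope ring_scope.
Set Implicit Arguments. Unset Strict Implicit. Unset Printing Implicit Defensive.

Lemma inv_meas (R : realType) : measurable_fun [set: R] (@GRing.inv R).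
Proof.
have -> : [set: R] = [set~ 0] `|` [set 0].
  by rewrite setUC setUCr.
apply/measurable_funU => //; first exact: measurableC.
split.
- apply: open_continuous_measurable_fun.
  + apply: closed_openC; apply: accessible_closed_set1; apply: hausdorff_accessible; exact: Rhausdorff.
  + move=> x /[!inE] x0; apply: inv_continuous; exact/eqP.
- move=> _ B mB; case: (pselect (B (0^-1))) => hB.
  + rewrite (_ : _ `&` _ = [set 0]) //; apply/seteqP; split => [x [] //|x ->].
    by split.
  + rewrite (_ : _ `&` _ = set0) //; apply/seteqP; split => [x [] /= -> //|//].
Qed.

Section M.
Context {R : realType} {d : measure_display} {Omega : measurableType d}.
Variable (G : set (set Omega)).
Hypothesis sG : sigma_algebra setT G.

Lemma meas_wrtE (f : Omega -> R) :
  meas_wrt G f <-> measurable_fun [set: g_sigma_algebraType G] f.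
Proof.
split.
- move=> mf _ B mB; rewrite setTI /measurable /= (sigma_algebra_id sG); exact: mf.
- move=> mf B mB; have := mf measurableT B mB.
  by rewrite setTI /measurable /= (sigma_algebra_id sG).
Qed.

Lemma meas_wrt_add (f g : Omega -> R) : meas_wrt G f -> meas_wrt G g -> meas_wrt G (fun x => f x + g x).
Proof. move=> /meas_wrtE hf /meas_wrtE hg; apply/meas_wrtE; exact: measurable_funD. Qed.
Lemma meas_wrt_mul (f g : Omega -> R) : meas_wrt G f -> meas_wrt G g -> meas_wrt G (fun x => f x * g x).
Proof. move=> /meas_wrtE hf /meas_wrtE hg; apply/meas_wrtE; exact: measurable_funM. Qed.
Lemma meas_wrt_comp (h : R -> R) (f : Omega -> R) : measurable_fun setT h -> meas_wrt G f -> meas_wrt G (fun x => h (f x)).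
Proof. move=> mh /meas_wrtE hf; apply/meas_wrtE; exact: measurableT_comp. Qed.
Lemma meas_wrt_cst (c : R) : meas_wrt G (fun=> c).
Proof. apply/meas_wrtE; exact: measurable_cst. Qed.
Lemma meas_wrt_opp (f : Omega -> R) : meas_wrt G f -> meas_wrt G (fun x => - f x).
Proof. exact: (@meas_wrt_comp (fun y => - y) f (@oppr_measurable R setT)). Qed.
Lemma meas_wrt_max0 (f : Omega -> R) : meas_wrt G f -> meas_wrt G (fun x => Num.max (f x) 0).
Proof. exact: (@meas_wrt_comp (fun y => Num.max y 0) f (measurable_maxr (@measurable_id _ _ setT) (measurable_cst (0:R)))). Qed.
Lemma meas_wrt_inv (f : Omega -> R) : meas_wrt G f -> meas_wrt G (fun x => (f x)^-1).
Proof. exact: (@meas_wrt_comp (fun y => y^-1) f (@inv_meas R)). Qed.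
End M.


Section L.
Context {R : realType} {d : measure_display} {Omega : measurableType d}.
Variable (P : probability Omega R).

Lemma aeT (Q : Omega -> Prop) : (forall x, Q x) -> {ae P, forall x, Q x}.
Proof. move=> h; exact: (@filterE _ _ (ae_filter_ringOfSetsType P)). Qed.
Lemma aeS1 (Q1 Q : Omega -> Prop) : (forall x, Q1 x -> Q x) ->
  {ae P, forall x, Q1 x} -> {ae P, forall x, Q x}.
Proof. move=> h; exact: (@filterS _ _ (ae_filter_ringOfSetsType P)). Qed.
Lemma aeS2 (Q1 Q2 Q : Omega -> Prop) : (forall x, Q1 x -> Q2 x -> Q x) ->
  {ae P, forall x, Q1 x} -> {ae P, forall x, Q2 x} -> {ae P, forall x, Q x}.
Proof. move=> h; exact: (@filterS2 _ _ (ae_filter_ringOfSetsType P)). Qed.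
Lemma aeS3 (Q1 Q2 Q3 Q : Omega -> Prop) : (forall x, Q1 x -> Q2 x -> Q3 x -> Q x) ->
  {ae P, forall x, Q1 x} -> {ae P, forall x, Q2 x} -> {ae P, forall x, Q3 x} ->
  {ae P, forall x, Q x}.
Proof. move=> h; exact: (@filterS3 _ _ (ae_filter_ringOfSetsType P)). Qed.

Variable (G : set (set Omega)).
Hypothesis sG : sigma_algebra setT G.
Hypothesis GM : G `<=` measurable.
Variable p : \bar R.
Hypothesis p0 : (0 <= p)%E.

Lemma meas_wrt_mf (g : Omega -> R) : meas_wrt G g -> measurable_fun setT g.
Proof. by move=> hg _ B mB; rewrite setTI; apply: GM; apply: hg. Qed.

Lemma Lp_dom2 f1 f2 g : Lp P p G f1 -> Lp P p G f2 -> meas_wrt G g ->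
  {ae P, forall x, `|g x| <= `|f1 x| + `|f2 x|} -> Lp P p G g.
Proof.
move=> [m1 h1] [m2 h2] mg hb; split => //.
case: p p0 h1 h2 => [r||] //= r0.
- case=> [->|i1]; first by left.
  case=> [->|i2]; first by left.
  right.
  have r0' : 0 <= r by rewrite lee_fin in r0.
  have mp (h : Omega -> R) : meas_wrt G h ->
      @measurable_fun _ _ Omega (\bar R) [set: Omega] (fun x => (`|h x| `^ r)%:E)%E.
    move=> /meas_wrt_mf mh; apply/measurable_EFinP.
    idtac.
    apply: (@measurableT_comp _ _ _ _ _ _ (fun y : R => y `^ r)); first exact: measurable_powR.
    apply: (@measurableT_comp _ _ _ _ _ _ (fun y : R => `|y|)); first exact: normr_measurable.
    exact: mh.
  have Hle : (\int[P]_x (`|g x| `^ r)%:E <= \int[P]_x (((2 `^ r) * (`|f1 x| `^ r + `|f2 x| `^ r))%:E))%E.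
    apply: ae_ge0_le_integral => //.
    - exact: (mp g mg).
    - apply/measurable_EFinP; apply: measurable_funM; first exact: measurable_cst.
      by apply: measurable_funD; apply/measurable_EFinP; [exact: (mp f1 m1)|exact: (mp f2 m2)].
    apply: aeS1 hb => x hx _; rewrite lee_fin.
    have hm : `|g x| <= 2 * Num.max `|f1 x| `|f2 x|.
      apply: (le_trans hx); rewrite mulr2n mulrDl mul1r.
      by apply: lerD; rewrite le_max lexx ?orbT.
    apply: (le_trans (ge0_ler_powR r0' _ _ hm)); rewrite ?nnegrE ?mulr_ge0 ?le_max ?normr_ge0 //.
    rewrite powRM // ?le_max ?normr_ge0 //; apply: ler_wpM2l; first exact: powR_ge0.
    by case: (leP `|f1 x| `|f2 x|) => _; rewrite ?lerDr ?lerDl powR_ge0.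
  apply: (le_lt_trans Hle).
  rewrite (_ : (fun x => _) = (fun x => (2 `^ r)%:E * ((`|f1 x| `^ r)%:E + (`|f2 x| `^ r)%:E)))%E; last first.
    by apply/funext => x; rewrite EFinM EFinD.
  rewrite ge0_integralZl //.
  - rewrite ge0_integralD //.
    + apply: lte_mul_pinfty; [by rewrite lee_fin powR_ge0|by []|exact: lte_add_pinfty].
    + exact: (mp f1 m1).
    + exact: (mp f2 m2).
  - by apply: emeasurable_funD; [exact: (mp f1 m1)|exact: (mp f2 m2)].
  - by move=> x _; rewrite adde_ge0 // lee_fin powR_ge0.
- move=> [M1 b1] [M2 b2]; exists (M1 + M2).
  apply: aeS3 hb b1 b2 => x hx e1 e2; apply: (le_trans hx); exact: lerD.
Qed.

Lemma Lp0 : Lp P p G (fun=> 0).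
Proof.
split; first exact: meas_wrt_cst.
case: p p0 => [r||] //= r0.
- have [->|rn0] := eqVneq r 0; first by left.
  right; rewrite (_ : (fun x => _) = (fun=> 0%E)); last first.
    by apply/funext => x; rewrite normr0 powR0.
  by rewrite integral0 ltry.
- by exists 0; apply: aeT => x; rewrite normr0.
Qed.

Lemma Lp_ae (f g : Omega -> R) : Lp P p G f -> meas_wrt G g -> as_eq P f g -> Lp P p G g.
Proof.
move=> hf mg e; apply: (Lp_dom2 hf Lp0 mg).
by apply: aeS1 e => x ->; rewrite normr0 addr0.
Qed.

Lemma Lp_add (f g : Omega -> R) : Lp P p G f -> Lp P p G g -> Lp P p G (fun x => f x + g x).
Proof.
move=> hf hg; apply: (Lp_dom2 hf hg); first exact: meas_wrt_add hf.1 hg.1.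
by apply: aeT => x; exact: ler_normD.
Qed.

Lemma Lp_opp (f : Omega -> R) : Lp P p G f -> Lp P p G (fun x => - f x).
Proof.
move=> hf; apply: (Lp_dom2 hf Lp0); first exact: meas_wrt_opp hf.1.
by apply: aeT => x; rewrite normrN normr0 addr0.
Qed.

Lemma Lp_max0 (f : Omega -> R) : Lp P p G f -> Lp P p G (fun x => Num.max (f x) 0).
Proof.
move=> hf; apply: (Lp_dom2 hf Lp0); first exact: meas_wrt_max0 hf.1.
apply: aeT => x; rewrite normr0 addr0.
by case: (leP (f x) 0) => h; rewrite ?normr0 ?normr_ge0 // lexx.
Qed.

Lemma Lp_cmul (c f : Omega -> R) : meas_wrt G c -> {ae P, forall x, `|c x| <= 1} ->
  Lp P p G f -> Lp P p G (fun x => c x * f x).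
Proof.
move=> mc hc hf; apply: (Lp_dom2 hf Lp0); first exact: meas_wrt_mul mc hf.1.
apply: aeS1 hc => x hx; rewrite normr0 addr0 normrM.
by rewrite -[leRHS]mul1r ler_wpM2r.
Qed.
End L.

Lemma Lp_sub {R : realType} {d : measure_display} {Omega : measurableType d}
  (P : probability Omega R) (p : \bar R) (G G' : set (set Omega)) (f : Omega -> R) :
  G `<=` G' -> Lp P p G f -> Lp P p G' f.
Proof. by move=> GG [mf h]; split => // B mB; apply: GG; apply: mf. Qed.



Section W.
Context {R : realType} {d : measure_display} {Omega : measurableType d}.
Variables (P : probability Omega R) (T : nat) (F : nat -> set (set Omega))
  (p : \bar R) (Rm Um : nat -> (Omega -> R) -> (Omega -> R)) (eta : nat -> Omega -> R).
Hypothesis hF : filtration T F.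
Hypothesis hp : (0 <= p)%E.
Hypothesis hR : dyn_risk_measure P p T F Rm.
Hypothesis hU : dyn_utility P p T F Um.
Hypothesis heta : forall t, (t < T)%N -> Lp P 0%E (F t) (eta t) /\
                          {ae P, forall x, 0 < eta t x}.

Local Notation Lpt t f := (Lp P p (F t) f).
Local Notation W := (Wmap Rm Um eta).

Lemma sF t : (t <= T)%N -> sigma_algebra setT (F t).
Proof. by case: hF => h _ _ _; exact: h. Qed.

Lemma FM t : (t <= T)%N -> F t `<=` measurable.
Proof. by case: hF => _ h _ hT ht; rewrite -hT; exact: h. Qed.

Lemma liftF s t (f : Omega -> R) : (s <= t)%N -> (t <= T)%N -> Lpt s f -> Lpt t f.
Proof. by case: hF => _ h _ _ st tT; apply: Lp_sub; exact: h. Qed.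

Lemma lift_plus s t (f : Omega -> R) : (s <= t)%N -> (t <= T)%N ->
  Lp_plus P p (F s) f -> Lp_plus P p (F t) f.
Proof. by move=> st tT [h1 h2]; split => //; exact: liftF h1. Qed.

Lemma LpD t (f g : Omega -> R) : (t <= T)%N -> Lpt t f -> Lpt t g -> Lpt t (fun x => f x + g x).
Proof. move=> ht. have := (Lp_add (P:=P) (sF ht) (FM ht) hp). exact. Qed.
Lemma LpN t (f : Omega -> R) : (t <= T)%N -> Lpt t f -> Lpt t (fun x => - f x).
Proof. by move=> ht; exact: (Lp_opp (P:=P) (sF ht) (FM ht) hp). Qed.
Lemma LpM0 t (f : Omega -> R) : (t <= T)%N -> Lpt t f -> Lpt t (fun x => Num.max (f x) 0).
Proof. by move=> ht; exact: (Lp_max0 (P:=P) (sF ht) (FM ht) hp). Qed.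
Lemma LpE t (f g : Omega -> R) : (t <= T)%N -> Lpt t f -> meas_wrt (F t) g -> as_eq P f g -> Lpt t g.
Proof. by move=> ht; exact: (Lp_ae (P:=P) (sF ht) (FM ht) hp). Qed.

Lemma as_le_refl_eq (f g : Omega -> R) : as_eq P f g -> as_le P f g.
Proof. by apply: aeS1 => x ->. Qed.
Lemma as_le_anti (f g : Omega -> R) : as_le P f g -> as_le P g f -> as_eq P f g.
Proof. by apply: aeS2 => x h1 h2; apply/le_anti; rewrite h1 h2. Qed.
Lemma as_eq_sym (f g : Omega -> R) : as_eq P f g -> as_eq P g f.
Proof. by apply: aeS1 => x ->. Qed.

Lemma Rm_ext t (Y Y' : Omega -> R) : (t < T)%N -> Lpt t.+1 Y -> Lpt t.+1 Y' ->
  as_eq P Y Y' -> as_eq P (Rm t Y) (Rm t Y').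
Proof.
move=> ht hY hY' e; have [_ _ hm _] := hR ht.
apply: as_le_anti; apply: hm => //; apply: as_le_refl_eq => //; exact: as_eq_sym.
Qed.

Lemma Um_ext t (Y Y' : Omega -> R) : (t < T)%N -> Lpt t.+1 Y -> Lpt t.+1 Y' ->
  as_eq P Y Y' -> as_eq P (Um t Y) (Um t Y').
Proof.
move=> ht hY hY' e; have [_ _ hm _] := hU ht.
apply: as_le_anti; apply: hm => //; apply: as_le_refl_eq => //; exact: as_eq_sym.
Qed.

Definition cc t x := (1 + eta t x)^-1.

Lemma cc_meas t : (t < T)%N -> meas_wrt (F t) (cc t).
Proof.
move=> ht; have s := sF (ltnW ht); rewrite /cc.
apply: (meas_wrt_inv s); apply: (meas_wrt_add s); first exact: meas_wrt_cst.
exact: (heta ht).1.1.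
Qed.

Lemma cc01 t : (t < T)%N -> {ae P, forall x, 0 <= cc t x /\ cc t x <= 1}.
Proof.
move=> ht; apply: aeS1 (heta ht).2 => x ex; rewrite /cc.
have h1 : 0 < 1 + eta t x by rewrite ltr_wpDr // ltW.
split; first by rewrite invr_ge0 ltW.
by rewrite invf_le1 // lerDl ltW.
Qed.

Lemma Lpcc t (f : Omega -> R) : (t < T)%N -> Lpt t f -> Lpt t (fun x => cc t x * f x).
Proof.
move=> ht; have ht' := ltnW ht.
apply: (Lp_cmul (P:=P) (sF ht') (FM ht') hp (cc_meas ht)).
by apply: aeS1 (cc01 ht) => x [h0 h1]; rewrite ger0_norm.
Qed.

Lemma WE t Y x : W t Y x = Rm t (fun x => - Y x) x -
  cc t x * Um t (fun y => Num.max (Rm t (fun x => - Y x) y - Y y) 0) x.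
Proof. by []. Qed.

Lemma W_Lp t Y : (t < T)%N -> Lpt t.+1 Y -> Lpt t (W t Y).
Proof.
move=> ht hY; have ht' := ltnW ht; have hS : (t.+1 <= T)%N := ht.
have [hR1 _ _ _] := hR ht; have [hU1 _ _ _] := hU ht.
have hr := hR1 _ (LpN hS hY).
have hZ := LpM0 hS (LpD hS (liftF (leqnSn t) hS hr) (LpN hS hY)).
have hu := hU1 _ hZ.
apply: (LpD ht' hr); apply: (LpN ht'); exact: Lpcc.
Qed.

Lemma W_mono t Y Y' : (t < T)%N -> Lpt t.+1 Y -> Lpt t.+1 Y' -> as_le P Y Y' ->
  as_le P (W t Y) (W t Y').
Proof.
move=> ht hY hY' hle; have ht' := ltnW ht; have hS : (t.+1 <= T)%N := ht.
have [hR1 _ hR3 _] := hR ht; have [hU1 hU2 hU3 _] := hU ht.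
set r := Rm t (fun x => - Y x); set r' := Rm t (fun x => - Y' x).
have hr : Lpt t r := hR1 _ (LpN hS hY).
have hr' : Lpt t r' := hR1 _ (LpN hS hY').
have hrr : as_le P r r'.
  by apply: hR3; [exact: LpN|exact: LpN|apply: aeS1 hle => x h; rewrite lerN2].
set Z := fun y => Num.max (r y - Y y) 0.
set Z' := fun y => Num.max (r' y - Y' y) 0.
have hZ : Lpt t.+1 Z := LpM0 hS (LpD hS (liftF (leqnSn t) hS hr) (LpN hS hY)).
have hZ' : Lpt t.+1 Z' := LpM0 hS (LpD hS (liftF (leqnSn t) hS hr') (LpN hS hY')).
have hd : Lpt t (fun x => r' x - r x) := LpD ht' hr' (LpN ht' hr).
have hZd : Lpt t.+1 (fun x => Z x + (r' x - r x)) := LpD hS hZ (liftF (leqnSn t) hS hd).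
have h1 : as_le P (Um t Z') (Um t (fun x => Z x + (r' x - r x))).
  apply: hU3 => //; apply: aeS2 hle hrr => x h1 h2; rewrite /Z /Z'.
  have -> : r' x - Y' x = (r x - Y x + (r' x - r x)) + (Y x - Y' x) by ring.
  set a := r x - Y x; set b := r' x - r x; set c := Y x - Y' x.
  have b0 : 0 <= b by rewrite subr_ge0.
  have c0 : c <= 0 by rewrite subr_le0.
  case: (leP a 0) => ha; case: (leP (a + b + c) 0) => hb; try lra.
  all: rewrite ?(max_r (ltW hb)) ?(max_r ha) ?(max_l (ltW hb)) ?(max_l (ltW ha)) ?(max_r hb) ?(max_l hb); try lra.
have h2 := hU2 _ _ hZ hd.
have e01 := cc01 ht.
apply: aeS3 h1 h2 (aeS2 (fun x a b => conj a b) hrr e01) => x u1 u2 [u3 [c0 c1]].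
rewrite !WE -/r -/r' -/Z -/Z'; move: u1; rewrite u2 => u1.
have h3 := ler_wpM2l c0 u1.
have h4 : cc t x * (r' x - r x) <= r' x - r x.
  by rewrite -[leRHS]mul1r ler_wpM2r // subr_ge0.
lra.
Qed.

Lemma W_ext t Y Y' : (t < T)%N -> Lpt t.+1 Y -> Lpt t.+1 Y' -> as_eq P Y Y' ->
  as_eq P (W t Y) (W t Y').
Proof.
move=> ht hY hY' e; apply: as_le_anti; apply: W_mono => //; apply: as_le_refl_eq => //.
exact: as_eq_sym.
Qed.

Lemma W_trans t Y (l : Omega -> R) : (t < T)%N -> Lpt t.+1 Y -> Lpt t l ->
  as_eq P (W t (fun x => Y x + l x)) (fun x => W t Y x + l x).
Proof.
move=> ht hY hl; have ht' := ltnW ht; have hS : (t.+1 <= T)%N := ht.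
have [hR1 hR2 _ _] := hR ht; have [hU1 hU2 hU3 _] := hU ht.
set r := Rm t (fun x => - Y x); set r2 := Rm t (fun x => - Y x + - l x).
have eR : Rm t (fun x => - (Y x + l x)) = r2.
  by rewrite /r2; congr (Rm t); apply/funext => x; rewrite opprD.
have hr : Lpt t r := hR1 _ (LpN hS hY).
have hl' := liftF (leqnSn t) hS hl.
have hr2 : Lpt t r2 := hR1 _ (LpD hS (LpN hS hY) (LpN hS hl')).
have e : as_eq P r2 (fun x => r x - - l x) := hR2 _ _ (LpN hS hY) (LpN ht' hl).
set Z := fun y => Num.max (r y - Y y) 0.
set Z2 := fun y => Num.max (r2 y - (Y y + l y)) 0.
have hZ : Lpt t.+1 Z := LpM0 hS (LpD hS (liftF (leqnSn t) hS hr) (LpN hS hY)).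
have hZ2 : Lpt t.+1 Z2 :=
  LpM0 hS (LpD hS (liftF (leqnSn t) hS hr2) (LpN hS (LpD hS hY hl'))).
have eZ : as_eq P Z2 Z.
  apply: aeS1 e => x ex; rewrite /Z /Z2 ex; congr Num.max; ring.
have eU := Um_ext ht hZ2 hZ eZ.
apply: aeS2 e eU => x ex eu.
rewrite !WE eR -/r -/Z -/Z2 eu ex; ring.
Qed.

Lemma W_hom t (a : Omega -> R) Y : (t < T)%N -> Lp_plus P p (F t) a -> Lpt t.+1 Y ->
  Lpt t.+1 (fun x => a x * Y x) ->
  as_eq P (W t (fun x => a x * Y x)) (fun x => a x * W t Y x).
Proof.
move=> ht ha hY haY; have ht' := ltnW ht; have hS : (t.+1 <= T)%N := ht.
have [hR1 _ _ hR4] := hR ht; have [hU1 _ _ hU4] := hU ht.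
have eR : Rm t (fun x => - (a x * Y x)) = Rm t (fun x => a x * - Y x).
  by congr (Rm t); apply/funext => x; rewrite mulrN.
have haY' : Lpt t.+1 (fun x => a x * - Y x).
  have -> : (fun x => a x * - Y x) = (fun x => - (a x * Y x)).
    by apply/funext => x; rewrite mulrN.
  exact: LpN.
set r := Rm t (fun x => - Y x); set r2 := Rm t (fun x => a x * - Y x).
have hr : Lpt t r := hR1 _ (LpN hS hY).
have hr2 : Lpt t r2 := hR1 _ haY'.
have e : as_eq P r2 (fun x => a x * r x) := hR4 _ _ (LpN hS hY) ha haY'.
set Z := fun y => Num.max (r y - Y y) 0.
set Z2 := fun y => Num.max (r2 y - a y * Y y) 0.
have hZ : Lpt t.+1 Z := LpM0 hS (LpD hS (liftF (leqnSn t) hS hr) (LpN hS hY)).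
have hZ2 : Lpt t.+1 Z2 :=
  LpM0 hS (LpD hS (liftF (leqnSn t) hS hr2) (LpN hS haY)).
have eZ : as_eq P Z2 (fun x => a x * Z x).
  apply: aeS2 e ha.2 => x ex a0; rewrite /Z /Z2 ex maxr_pMr // mulr0 mulrBr //.
have haZ : Lpt t.+1 (fun x => a x * Z x).
  apply: (LpE hS hZ2) eZ; apply: (meas_wrt_mul (sF hS)); last exact: hZ.1.
  exact: (liftF (leqnSn t) hS ha.1).1.
have eU := Um_ext ht hZ2 haZ eZ.
have eU2 : as_eq P (Um t (fun x => a x * Z x)) (fun x => a x * Um t Z x) :=
  hU4 _ _ hZ ha haZ.
apply: aeS3 e eU eU2 => x ex eu eu2.
rewrite !WE eR -/r -/r2 -/Z -/Z2 eu eu2 ex; ring.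
Qed.

Local Notation Ch := (Wchain Rm Um eta).

Lemma C_Lp k : forall t Y, (t + k <= T)%N -> Lpt (t + k) Y -> Lpt t (Ch t k Y).
Proof.
elim: k => [|k IH] t Y htk hY /=; first by move: hY; rewrite addn0.
have ht : (t < T)%N by lia.
apply: W_Lp => //; apply: IH; rewrite addSnnS //.
Qed.

Lemma C_mono k : forall t Y Y', (t + k <= T)%N -> Lpt (t + k) Y -> Lpt (t + k) Y' ->
  as_le P Y Y' -> as_le P (Ch t k Y) (Ch t k Y').
Proof.
elim: k => [|k IH] t Y Y' htk hY hY' hle //=.
have ht : (t < T)%N by lia.
rewrite -addSnnS in htk hY hY'.
apply: W_mono => //; [exact: C_Lp|exact: C_Lp|exact: IH].
Qed.

Lemma C_ext k t Y Y' : (t + k <= T)%N -> Lpt (t + k) Y -> Lpt (t + k) Y' ->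
  as_eq P Y Y' -> as_eq P (Ch t k Y) (Ch t k Y').
Proof.
move=> htk hY hY' e; apply: as_le_anti; apply: C_mono => //; apply: as_le_refl_eq => //.
exact: as_eq_sym.
Qed.

Lemma C_trans k : forall t Y (l : Omega -> R), (t + k <= T)%N -> Lpt (t + k) Y -> Lpt t l ->
  as_eq P (Ch t k (fun x => Y x + l x)) (fun x => Ch t k Y x + l x).
Proof.
elim: k => [|k IH] t Y l htk hY hl /=.
  by apply: aeT.
have ht : (t < T)%N by lia.
have hS : (t.+1 <= T)%N := ht.
rewrite -addSnnS in htk hY.
have hl' := liftF (leqnSn t) hS hl.
have hl2 : Lpt (t.+1 + k) l by apply: liftF hl; lia.
have e1 := IH _ _ _ htk hY hl'.
have h1 : Lpt t.+1 (Ch t.+1 k (fun x => Y x + l x)) by apply: C_Lp => //; exact: LpD.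
have h2 : Lpt t.+1 (fun x => Ch t.+1 k Y x + l x) by apply: LpD => //; exact: C_Lp.
apply: aeS2 (W_ext ht h1 h2 e1) (W_trans ht (C_Lp htk hY) hl) => x -> -> //.
Qed.

Lemma C_hom k : forall t (a : Omega -> R) Y, (t + k <= T)%N -> Lp_plus P p (F t) a ->
  Lpt (t + k) Y -> Lpt (t + k) (fun x => a x * Y x) ->
  as_eq P (Ch t k (fun x => a x * Y x)) (fun x => a x * Ch t k Y x).
Proof.
elim: k => [|k IH] t a Y htk ha hY haY /=.
  by apply: aeT.
have ht : (t < T)%N by lia.
have hS : (t.+1 <= T)%N := ht.
rewrite -addSnnS in htk hY haY.
have ha' := lift_plus (leqnSn t) hS ha.
have e1 := IH _ _ _ htk ha' hY haY.
have h1 : Lpt t.+1 (Ch t.+1 k (fun x => a x * Y x)) by apply: C_Lp.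
have hZ : Lpt t.+1 (Ch t.+1 k Y) by apply: C_Lp.
have h2 : Lpt t.+1 (fun x => a x * Ch t.+1 k Y x).
  apply: (LpE hS h1) e1; apply: (meas_wrt_mul (sF hS)); last exact: hZ.1.
  exact: ha'.1.1.
apply: aeS2 (W_ext ht h1 h2 e1) (W_hom ht ha hZ h2) => x -> -> //.
Qed.

Lemma C_split k : forall t m Y, Ch t (k + m) Y = Ch t k (Ch (t + k) m Y).
Proof.
elim: k => [|k IH] t m Y /=; first by rewrite addn0.
by rewrite IH addSnnS.
Qed.

End W.


Section S.
Context {R : realType} {d : measure_display} {Omega : measurableType d}.
Variables (P : probability Omega R) (G : set (set Omega)) (p : \bar R).
Hypothesis sG : sigma_algebra setT G.
Hypothesis GM : G `<=` measurable.
Hypothesis hp : (0 <= p)%E.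

Lemma Lp_sum m n (f : nat -> Omega -> R) :
  (forall u, (m <= u < n)%N -> Lp P p G (f u)) ->
  Lp P p G (fun x => \sum_(m <= u < n) f u x).
Proof.
elim: n => [|n IH] hf.
  rewrite (_ : (fun x => _) = fun=> 0); first exact: Lp0.
  by apply/funext => x; rewrite big_geq.
have [mn|nm] := leqP m n.
  rewrite (_ : (fun x => _) = (fun x => \sum_(m <= u < n) f u x + f n x)); last first.
    by apply/funext => x; rewrite big_nat_recr.
  apply: (Lp_add sG GM hp); first by apply: IH => u /andP[h1 h2]; apply: hf; rewrite h1 ltnS ltnW.
  by apply: hf; rewrite mn ltnSn.
rewrite (_ : (fun x => _) = fun=> 0); first exact: Lp0.
by apply/funext => x; rewrite big_geq.
Qed.
End S.

Lemma ae_sum_le {R : realType} {d : measure_display} {Omega : measurableType d}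
  (P : probability Omega R) m n (f g : nat -> Omega -> R) :
  (forall u, (m <= u < n)%N -> as_le P (f u) (g u)) ->
  as_le P (fun x => \sum_(m <= u < n) f u x) (fun x => \sum_(m <= u < n) g u x).
Proof.
elim: n => [|n IH] hf.
  by apply: aeT => x; rewrite !big_geq.
have [mn|nm] := leqP m n.
  have h1 : as_le P (fun x => \sum_(m <= u < n) f u x) (fun x => \sum_(m <= u < n) g u x).
    by apply: IH => u /andP[h1 h2]; apply: hf; rewrite h1 ltnS ltnW.
  have h2 : as_le P (f n) (g n) by apply: hf; rewrite mn ltnSn.
  by apply: aeS2 h1 h2 => x e1 e2; rewrite !big_nat_recr //=; exact: lerD.
by apply: aeT => x; rewrite !big_geq.
Qed.

Lemma ae_sum_eq {R : realType} {d : measure_display} {Omega : measurableType d}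
  (P : probability Omega R) m n (f g : nat -> Omega -> R) :
  (forall u, (m <= u < n)%N -> as_eq P (f u) (g u)) ->
  as_eq P (fun x => \sum_(m <= u < n) f u x) (fun x => \sum_(m <= u < n) g u x).
Proof.
move=> h; apply: (as_le_anti (P:=P)); apply: ae_sum_le => u hu.
  by apply: as_le_refl_eq; apply: h.
by apply: as_le_refl_eq; apply: as_eq_sym; apply: h.
Qed.


Unset Implicit Arguments.
Theorem proposition2 (R : realType) (d : measure_display) (Omega : measurableType d)
  (P : probability Omega R) (T : nat) (F : nat -> set (set Omega))
  (p : \bar R) (Rm Um : nat -> (Omega -> R) -> (Omega -> R)) (eta : nat -> Omega -> R)
  (X Xt : nat -> Omega -> R) :
  (1 <= T)%N ->
  filtration T F ->
  (0 <= p)%E ->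
  dyn_risk_measure P p T F Rm ->
  dyn_utility P p T F Um ->
  (forall t, (t < T)%N -> Lp P 0%E (F t) (eta t) /\
                          {ae P, forall x, 0 < eta t x}) ->
  (forall s, (1 <= s <= T)%N -> Lp P p (F s) (X s) /\ Lp P p (F s) (Xt s)) ->
  (* (i) *)
  (forall t (a : Omega -> R), (t < T)%N ->
     Lp_plus P p (F t) a ->
     (forall u, (t < u <= T)%N -> Lp P p (F u) (fun x => a x * X u x)) ->
     as_eq P (CoCM T Rm Um eta t (fun u x => a x * X u x))
             (fun x => a x * CoCM T Rm Um eta t X x)) /\
  (forall t (b : nat -> Omega -> R), (t < T)%N ->
     (forall u, (1 <= u <= T)%N -> Lp P p (F t) (b u)) ->
     as_eq P (CoCM T Rm Um eta t (fun u x => X u x + b u x))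
             (fun x => CoCM T Rm Um eta t X x + \sum_(t.+1 <= u < T.+1) b u x)) /\
  (forall t, (t < T)%N ->
     (forall u, (1 <= u <= T)%N -> as_le P (X u) (Xt u)) ->
     as_le P (CoCM T Rm Um eta t X) (CoCM T Rm Um eta t Xt)) /\
  (* (ii) time consistency *)
  (forall s t, (s <= t)%N -> (t <= T)%N ->
     (forall u, (1 <= u <= t)%N -> as_eq P (X u) (Xt u)) ->
     as_le P (CoCM T Rm Um eta t X) (CoCM T Rm Um eta t Xt) ->
     as_le P (CoCM T Rm Um eta s X) (CoCM T Rm Um eta s Xt)).
Proof.
move=> hT hF hp hR hU heta hX.
have sT : sigma_algebra setT (F T) := sF hF (leqnn T).
have MT : F T `<=` measurable := FM hF (leqnn T).
have hS : forall (Y : nat -> Omega -> R) m n, (n <= T)%N ->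
    (forall u, (m < u <= n)%N -> Lp P p (F u) (Y u)) ->
    Lp P p (F n) (fun x => \sum_(m.+1 <= u < n.+1) Y u x).
  move=> Y m n nT hY; apply: (Lp_sum (sF hF nT) (FM hF nT) hp) => u /andP[h1 h2].
  apply: (liftF (P:=P) hF _ nT); last by apply: hY; rewrite h1.
  by rewrite -ltnS.
have hXs : forall m n, (n <= T)%N -> Lp P p (F n) (fun x => \sum_(m.+1 <= u < n.+1) X u x).
  move=> m n nT; apply: hS => // u /andP[h1 h2].
  have hu : (1 <= u <= T)%N by apply/andP; split; [apply: leq_ltn_trans h1|apply: leq_trans nT].
  by apply: (liftF (P:=P) hF (leqnn u)) => //; [case/andP: hu|exact: (hX u hu).1].
have hXts : forall m n, (n <= T)%N -> Lp P p (F n) (fun x => \sum_(m.+1 <= u < n.+1) Xt u x).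
  move=> m n nT; apply: hS => // u /andP[h1 h2].
  have hu : (1 <= u <= T)%N by apply/andP; split; [apply: leq_ltn_trans h1|apply: leq_trans nT].
  by apply: (liftF (P:=P) hF (leqnn u)) => //; [case/andP: hu|exact: (hX u hu).2].
split.
  move=> t a ht ha haX; rewrite /CoCM.
  have e : (t + (T - t))%N = T by lia.
  rewrite (_ : (fun x => _) = (fun x => a x * \sum_(t.+1 <= u < T.+1) X u x)); last first.
    by apply/funext => x; rewrite mulr_sumr.
  apply: (C_hom hF hp hR hU heta); rewrite ?e //; first exact: hXs.
  rewrite (_ : (fun x => _) = (fun x => \sum_(t.+1 <= u < T.+1) a x * X u x)); last first.
    by apply/funext => x; rewrite mulr_sumr.
  by apply: hS.
split.
  move=> t b ht hb; rewrite /CoCM.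
  have e : (t + (T - t))%N = T by lia.
  rewrite (_ : (fun x => _) = (fun x => \sum_(t.+1 <= u < T.+1) X u x + \sum_(t.+1 <= u < T.+1) b u x)); last first.
    by apply/funext => x; rewrite big_split.
  apply: (C_trans hF hp hR hU heta); rewrite ?e //; first exact: hXs.
  apply: (Lp_sum (sF hF (ltnW ht)) (FM hF (ltnW ht)) hp) => u /andP[h1 h2].
  apply: hb; apply/andP; split; [exact: leq_ltn_trans h1|by rewrite -ltnS].
split.
  move=> t ht hle; rewrite /CoCM.
  have e : (t + (T - t))%N = T by lia.
  apply: (C_mono hF hp hR hU heta); rewrite ?e //; [exact: hXs|exact: hXts|].
  apply: ae_sum_le => u /andP[h1 h2]; apply: hle; apply/andP; split.
    exact: leq_ltn_trans h1.
  by rewrite -ltnS.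
move=> s t st tT heq hle; rewrite /CoCM.
have e1 : (T - s)%N = ((t - s) + (T - t))%N by lia.
have e2 : (s + (t - s))%N = t by lia.
have e3 : (t + (T - t))%N = T by lia.
rewrite e1 !(C_split _ _ _ (t - s)) e2.
have hsplit : forall Y : nat -> Omega -> R,
    (fun x => \sum_(s.+1 <= u < T.+1) Y u x) =
    (fun x => \sum_(t.+1 <= u < T.+1) Y u x + \sum_(s.+1 <= u < t.+1) Y u x).
  by move=> Y; apply/funext => x; rewrite (big_cat_nat _ (n:=t.+1)) ?ltnS // addrC.
rewrite !hsplit.
have hk : (t + (T - t) <= T)%N by lia.
have hL := hXs s t tT; have hLt := hXts s t tT.
have hXT : Lp P p (F (t + (T - t))%N) (fun x => \sum_(t.+1 <= u < T.+1) X u x).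
  by rewrite e3; exact: hXs.
have hXtT : Lp P p (F (t + (T - t))%N) (fun x => \sum_(t.+1 <= u < T.+1) Xt u x).
  by rewrite e3; exact: hXts.
have hA := C_trans hF hp hR hU heta hk hXT hL.
have hAt := C_trans hF hp hR hU heta hk hXtT hLt.
have eL : as_eq P (fun x => \sum_(s.+1 <= u < t.+1) X u x) (fun x => \sum_(s.+1 <= u < t.+1) Xt u x).
  apply: ae_sum_eq => u /andP[h1 h2]; apply: heq; apply/andP; split.
    exact: leq_ltn_trans h1.
  by rewrite -ltnS.
have hk2 : (s + (t - s) <= T)%N by lia.
move: (C_mono hF hp hR hU heta (k := t - s) (t := s)).
rewrite e2 => Cm; apply: Cm => //.
- apply: (C_Lp hF hp hR hU heta hk); rewrite e3; apply: (LpD hF hp (leqnn T)).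
    exact: hXs.
  exact: (liftF (P:=P) hF tT (leqnn T) hL).
- apply: (C_Lp hF hp hR hU heta hk); rewrite e3; apply: (LpD hF hp (leqnn T)).
    exact: hXts.
  exact: (liftF (P:=P) hF tT (leqnn T) hLt).
apply: aeS2 (aeS2 (fun x a b => conj a b) hA hAt) (aeS2 (fun x a b => conj a b) hle eL).
move=> x [-> ->] [h1 ->]; exact: lerD.
Qed.
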